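(* There is an absolute constant $c>0$ such that for every instance $I$ of continuous BGT, the schedule produced by Algorithm 1 satisfies $\mathrm{MH}\le c\cdot \frac{h_{\max}}{h_{\min}}\cdot\mathrm{OPT}(I)$. (Algorithm 1: compute a minimum spanning tree $T$ of $V$ with respect to the travel times, and let the robot, starting at $v_1$, repeatedly traverse a closed Euler tour of $T$, i.e. a closed walk starting and ending at $v_1$ that traverses every edge of $T$ exactly twice; bamboos are cut whenever the robot is at their point.)
   Context: Continuous BGT: bamboos at points $V=\{v_1,\dots,v_n\}$, $n\ge2$, growth rates $h_1\ge\dots\ge h_n>0$ with $h_1>h_n$, initial heights $0$; symmetric travel times $t_{i,j}>0$ ($i\ne j$) satisfying the triangle inequality. A robot starts at $v_1$ at time $0$, travels between points with time $t_{i,j}$ from $v_i$ to $v_j$, and cuts the bamboo at every point it is at, instantaneously, to height $0$. Height of $b_i$ at time $t$ is $h_i$ times time elapsed since its last cut (or since $0$). $\mathrm{MH}$ of a schedule is the supremum of all heights over all times; $\mathrm{OPT}(I)$ is the infimum of $\mathrm{MH}$ over all robot walks. $h_{\max}=h_1$, $h_{\min}=h_n$. *)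

(* Defs.v *)
From Stdlib Require Import Reals List Arith.
From Coquelicot Require Import Coquelicot.
Import ListNotations.
Open Scope R_scope.

(* Points v_1..v_n are indexed 0..n-1 (v_1 = index 0).
   h i = growth rate of bamboo i, t i j = travel time from v_i to v_j. *)

Definition valid_instance (n : nat) (h : nat -> R) (t : nat -> nat -> R) : Prop :=
  (2 <= n)%nat /\
  (forall i j, (i <= j)%nat -> (j < n)%nat -> h j <= h i) /\
  0 < h (n - 1)%nat /\
  h (n - 1)%nat < h 0%nat /\
  (forall i j, (i < n)%nat -> (j < n)%nat -> i <> j -> 0 < t i j) /\
  (forall i j, (i < n)%nat -> (j < n)%nat -> i <> j -> t i j = t j i) /\
  (forall i j k, (i < n)%nat -> (j < n)%nat -> (k < n)%nat ->
     i <> j -> j <> k -> i <> k -> t i k <= t i j + t j k).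

(* A robot walk: the k-th stop is point w k, reached at time a k and left at
   time d k (a k <= d k: the robot may wait); travelling from w k to w (k+1)
   takes exactly t (w k) (w (k+1)). *)
Definition valid_walk (n : nat) (t : nat -> nat -> R)
  (w : nat -> nat) (a d : nat -> R) : Prop :=
  w 0%nat = 0%nat /\ a 0%nat = 0 /\
  (forall k, (w k < n)%nat) /\
  (forall k, w (S k) <> w k) /\
  (forall k, a k <= d k) /\
  (forall k, a (S k) = d k + t (w k) (w (S k))).

Definition at_point (w : nat -> nat) (a d : nat -> R) (i : nat) (s : R) : Prop :=
  exists k, w k = i /\ a k <= s <= d k.

(* time of the last cut of bamboo i up to time tau (0 if never cut) *)
Definition last_cut (w : nat -> nat) (a d : nat -> R) (i : nat) (tau : R) : R :=
  real (Lub_Rbar (fun s => s = 0 \/ (0 <= s <= tau /\ at_point w a d i s))).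

Definition height (h : nat -> R) (w : nat -> nat) (a d : nat -> R)
  (i : nat) (tau : R) : R :=
  h i * (tau - last_cut w a d i tau).

Definition MH (n : nat) (h : nat -> R) (w : nat -> nat) (a d : nat -> R) : Rbar :=
  Lub_Rbar (fun x => exists i tau, (i < n)%nat /\ 0 <= tau /\ x = height h w a d i tau).

Definition OPT (n : nat) (h : nat -> R) (t : nat -> nat -> R) : Rbar :=
  Rbar_glb (fun M => exists w a d, valid_walk n t w a d /\ M = MH n h w a d).

Definition edge_in (T : list (nat * nat)) (x y : nat) : Prop :=
  In (x, y) T \/ In (y, x) T.

Inductive reach (T : list (nat * nat)) : nat -> nat -> Prop :=
| reach_refl : forall x, reach T x x
| reach_step : forall x y z, reach T x y -> edge_in T y z -> reach T x z.

Definition spanning_tree (n : nat) (T : list (nat * nat)) : Prop :=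
  NoDup T /\
  (forall u v, In (u, v) T -> (u < v)%nat /\ (v < n)%nat) /\
  length T = (n - 1)%nat /\
  (forall v, (v < n)%nat -> reach T 0%nat v).

Definition tree_weight (t : nat -> nat -> R) (T : list (nat * nat)) : R :=
  fold_right (fun e acc => t (fst e) (snd e) + acc) 0 T.

Definition is_MST (n : nat) (t : nat -> nat -> R) (T : list (nat * nat)) : Prop :=
  spanning_tree n T /\
  forall T', spanning_tree n T' -> tree_weight t T <= tree_weight t T'.

Definition same_edge (e : nat * nat) (x y : nat) : bool :=
  ((x =? fst e) && (y =? snd e)) || ((x =? snd e) && (y =? fst e)).

Definition euler_tour (T : list (nat * nat)) (p : nat -> nat) (m : nat) : Prop :=
  (0 < m)%nat /\ p 0%nat = 0%nat /\ p m = 0%nat /\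
  (forall k, (k < m)%nat -> edge_in T (p k) (p (S k))) /\
  (forall e, In e T ->
     length (filter (fun k => same_edge e (p k) (p (S k))) (seq 0 m)) = 2%nat).

(* Algorithm 1: repeat the tour forever, without waiting *)
Definition alg_walk (p : nat -> nat) (m : nat) (k : nat) : nat := p (k mod m).

Fixpoint alg_time (t : nat -> nat -> R) (p : nat -> nat) (m : nat) (k : nat) : R :=
  match k with
  | O => 0
  | S k' => alg_time t p m k' + t (alg_walk p m k') (alg_walk p m (S k'))
  end.

(* Main.v *)
Require Import Defs.
From Stdlib Require Import Reals List Arith Lia Lra Classical.
From Coquelicot Require Import Coquelicot.
Import ListNotations.
Open Scope R_scope.

Lemma lub_elem (E : R -> Prop) x : E x -> Rbar_le (Finite x) (Lub_Rbar E).
Proof. intros Hx. destruct (Lub_Rbar_correct E) as [Hub _]. apply Hub, Hx. Qed.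

Lemma lub_ge (E : R -> Prop) x b : E x -> (forall y, E y -> y <= b) -> x <= real (Lub_Rbar E).
Proof.
  intros Hx Hb. destruct (Lub_Rbar_correct E) as [Hub Hl].
  assert (H1 := Hub x Hx).
  assert (H2 : Rbar_le (Lub_Rbar E) (Finite b)) by (apply Hl; intros y Hy; simpl; apply Hb; auto).
  destruct (Lub_Rbar E); simpl in *; auto; contradiction.
Qed.

Lemma lub_zero (E : R -> Prop) : E 0 -> (forall y, E y -> y <= 0) -> real (Lub_Rbar E) = 0.
Proof.
  intros Hx Hb. destruct (Lub_Rbar_correct E) as [Hub Hl].
  assert (H1 := Hub 0 Hx).
  assert (H2 : Rbar_le (Lub_Rbar E) (Finite 0)) by (apply Hl; intros y Hy; simpl; apply Hb; auto).
  destruct (Lub_Rbar E); simpl in *; try contradiction. lra.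
Qed.

Lemma MH_nonneg n h w a d : (0 < n)%nat -> Rbar_le (Finite 0) (MH n h w a d).
Proof.
  intros Hn. unfold MH. apply lub_elem. exists 0%nat, 0. split; [lia|split;[lra|]].
  unfold height, last_cut. rewrite lub_zero.
  - ring.
  - left; auto.
  - intros y [->|[H _]]; lra.
Qed.

Lemma walk_t_pos n h t w a d : valid_instance n h t -> valid_walk n t w a d ->
  forall k, 0 < t (w k) (w (S k)).
Proof.
  intros [_ [_ [_ [_ [Ht _]]]]] [_ [_ [Hw [Hne _]]]] k.
  apply Ht; auto.
Qed.

Lemma walk_a_step n h t w a d : valid_instance n h t -> valid_walk n t w a d ->
  forall k, a k + t (w k) (w (S k)) <= a (S k).
Proof.
  intros Hi Hv k. destruct Hv as [_ [_ [_ [_ [Had Ha]]]]]. rewrite Ha. specialize (Had k). lra.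
Qed.

Lemma walk_a_mono n h t w a d : valid_instance n h t -> valid_walk n t w a d ->
  forall k k', (k <= k')%nat -> a k <= a k'.
Proof.
  intros Hi Hv k k' H. induction H. lra.
  pose proof (walk_a_step _ _ _ _ _ _ Hi Hv m). pose proof (walk_t_pos _ _ _ _ _ _ Hi Hv m). lra.
Qed.

Lemma reach_mono E E' x y : (forall u v, edge_in E u v -> edge_in E' u v) -> reach E x y -> reach E' x y.
Proof.
  intros Hm H. induction H. constructor. eapply reach_step; eauto.
Qed.

Lemma build_tree n h t w a d : valid_instance n h t -> valid_walk n t w a d ->
  forall K, exists E L,
  NoDup L /\ (forall x, In x L <-> exists k, (k <= K)%nat /\ w k = x) /\ NoDup E /\
  (forall u v, In (u,v) E -> (u < v)%nat /\ (v < n)%nat /\ In u L /\ In v L) /\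
  S (length E) = length L /\ (forall x, In x L -> reach E 0%nat x) /\ tree_weight t E <= a K.
Proof.
  intros Hi Hv. pose proof Hv as Hv'. destruct Hv' as [Hw0 [Ha0 [Hwn [Hne _]]]].
  pose proof Hi as Hi'. destruct Hi' as [_ [_ [_ [_ [Htp [Hts _]]]]]].
  induction K.
  - exists [], [0%nat]. split; [constructor; [simpl; tauto|constructor]|].
    split; [|split;[constructor|split;[simpl;tauto|split;[reflexivity|split]]]].
    + intros x; split.
      * intros [<-|[]]. exists 0%nat; split; auto.
      * intros [k [Hk <-]]. assert (k = 0%nat) by lia. subst. left; auto.
    + intros x [<-|[]]. constructor.
    + simpl. rewrite Ha0; lra.
  - destruct IHK as [E [L [HL [HLm [HE [HEe [Hlen [Hr Hwt]]]]]]]].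
    pose proof (walk_a_step _ _ _ _ _ _ Hi Hv K) as Hst.
    pose proof (walk_t_pos _ _ _ _ _ _ Hi Hv K) as Htk.
    set (x := w K) in *. set (y := w (S K)) in *.
    assert (HxL : In x L) by (apply HLm; exists K; auto).
    destruct (in_dec Nat.eq_dec y L) as [HyL|HyL].
    + exists E, L. repeat split; auto; try (apply HEe in H; tauto); try lra.
      * intros Hx. apply HLm in Hx. destruct Hx as [k [Hk Hx]]. exists k; split; auto.
      * intros [k [Hk Hx]]. destruct (Nat.eq_dec k (S K)). subst k. subst y. rewrite <- Hx. auto.
        apply HLm. exists k; split; auto; lia.
    + assert (Hxy : x <> y) by (intro Hxy; apply HyL; rewrite <- Hxy; auto).
      assert (Hxn : (x < n)%nat) by apply Hwn.
      assert (Hyn : (y < n)%nat) by apply Hwn.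
      assert (Huv : exists u v, (u < v)%nat /\ ((u = x /\ v = y) \/ (u = y /\ v = x))).
      { destruct (Nat.lt_ge_cases x y). exists x, y; split; auto.
        exists y, x; split; [lia|auto]. }
      destruct Huv as [u [v [Huv Hc]]].
      exists ((u,v) :: E), (y :: L).
      split; [constructor; auto|].
      split.
      { intros z; split.
        - intros [<-|Hz]. exists (S K); auto. apply HLm in Hz. destruct Hz as [k [Hk Hz]]. exists k; split; auto.
        - intros [k [Hk Hz]]. destruct (Nat.eq_dec k (S K)). subst k. left; auto.
          right. apply HLm. exists k; split; auto; lia. }
      split.
      { constructor; auto. intro Hin. apply HEe in Hin. destruct Hc as [[-> ->]|[-> ->]]; tauto. }
      split.
      { intros u' v' [Heq|Hin].
        - injection Heq as <- <-. destruct Hc as [[-> ->]|[-> ->]]; simpl; repeat split; auto.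
        - apply HEe in Hin. simpl; tauto. }
      split; [simpl; lia|].
      split.
      { assert (Hm : forall a b, edge_in E a b -> edge_in ((u,v)::E) a b).
        { intros a0 b0 [H|H]; [left|right]; right; auto. }
        intros z [<-|Hz].
        - apply reach_step with x. apply reach_mono with E; auto.
          destruct Hc as [[-> ->]|[-> ->]]; [left|right]; left; auto.
        - apply reach_mono with E; auto. }
      simpl. assert (t u v = t x y).
      { destruct Hc as [[-> ->]|[-> ->]]; auto. }
      rewrite H. lra.
Qed.

Lemma weight_bound n h t T w a d K : valid_instance n h t -> is_MST n t T -> valid_walk n t w a d ->
  (forall v, (v < n)%nat -> exists k, (k <= K)%nat /\ w k = v) -> tree_weight t T <= a K.
Proof.
  intros Hi [_ HM] Hv Hall.
  destruct (build_tree _ _ _ _ _ _ Hi Hv K) as [E [L [HL [HLm [HE [HEe [Hlen [Hr Hwt]]]]]]]].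
  assert (Hwn : forall k, (w k < n)%nat) by apply Hv.
  assert (HLn : length L = n).
  { apply Nat.le_antisymm.
    - rewrite <- (length_seq n 0). apply NoDup_incl_length; auto.
      intros z Hz. apply HLm in Hz. destruct Hz as [k [_ <-]]. apply in_seq. specialize (Hwn k). lia.
    - rewrite <- (length_seq n 0) at 1. apply NoDup_incl_length. apply seq_NoDup.
      intros z Hz. apply in_seq in Hz. apply HLm. apply Hall. lia. }
  assert (spanning_tree n E).
  { split; auto. split. intros u v H. apply HEe in H. tauto. split. lia.
    intros v Hvn. apply Hr. apply HLm. apply Hall; auto. }
  specialize (HM E H). lra.
Qed.

Lemma collect_K n w (a : nat -> R) tau : (forall k k', (k <= k')%nat -> a k <= a k') -> a 0%nat <= tau ->
  (forall v, (v < n)%nat -> exists k, w k = v /\ a k <= tau) ->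
  forall n', (n' <= n)%nat -> exists K, a K <= tau /\ forall v, (v < n')%nat -> exists k, (k <= K)%nat /\ w k = v.
Proof.
  intros Hm H0 Hall n' Hn'. induction n'.
  - exists 0%nat. split; auto. intros; lia.
  - destruct IHn' as [K [HK HKv]]; [lia|].
    destruct (Hall n') as [k [Hk Hak]]; [lia|].
    exists (Nat.max K k). split.
    + destruct (Nat.max_spec K k) as [[_ ->]|[_ ->]]; auto.
    + intros v Hv. destruct (Nat.eq_dec v n').
      * subst. exists k; split; auto; lia.
      * destruct (HKv v) as [k' [Hk' Hw]]; [lia|]. exists k'; split; auto; lia.
Qed.

Lemma MH_lower n h t T w a d : valid_instance n h t -> is_MST n t T -> valid_walk n t w a d ->
  Rbar_le (Finite (h (n-1)%nat * tree_weight t T)) (MH n h w a d).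
Proof.
  intros Hi HT Hv. set (W := tree_weight t T).
  pose proof Hi as [Hn2 [Hhm [Hhp _]]].
  assert (Hlow : forall tau, 0 <= tau < W -> Rbar_le (Finite (h (n-1)%nat * tau)) (MH n h w a d)).
  { intros tau Htau.
    destruct (classic (exists v, (v < n)%nat /\ forall k, w k = v -> tau < a k)) as [[v [Hvn Hvk]]|Hno].
    - apply Rbar_le_trans with (Finite (height h w a d v tau)).
      + simpl. unfold height, last_cut. rewrite lub_zero.
        * rewrite Rminus_0_r. apply Rmult_le_compat_r; [lra|]. apply Hhm; lia.
        * left; auto.
        * intros y [->|[Hy [k [Hk Hak]]]]. lra. specialize (Hvk k Hk). lra.
      + unfold MH. apply lub_elem. exists v, tau. split; auto. split; [lra|auto].
    - exfalso.
      assert (Hall : forall v, (v < n)%nat -> exists k, w k = v /\ a k <= tau).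
      { intros v Hvn. apply NNPP. intro Hc. apply Hno. exists v. split; auto.
        intros k Hk. apply Rnot_le_lt. intro Hle. apply Hc. exists k; auto. }
      assert (Hm := walk_a_mono _ _ _ _ _ _ Hi Hv).
      assert (Ha0 : a 0%nat = 0) by apply Hv.
      destruct (collect_K n w a tau Hm ltac:(lra) Hall n (le_n n)) as [K [HK HKv]].
      pose proof (weight_bound _ _ _ _ _ _ _ K Hi HT Hv HKv). fold W in H. lra. }
  pose proof (MH_nonneg n h w a d ltac:(lia)) as H0.
  destruct (MH n h w a d) as [r| |] eqn:HMH; simpl; auto.
  - simpl in H0. apply Rnot_lt_le. intro Hlt.
    set (hm := h (n-1)%nat) in *.
    set (q := r / hm).
    assert (Hq : r = q * hm) by (unfold q; field; lra).
    assert (Hq0 : 0 <= q) by (unfold q; apply Rdiv_le_0_compat; lra).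
    assert (HqW : q < W).
    { apply Rmult_lt_reg_r with hm; [lra|]. rewrite <- Hq. lra. }
    specialize (Hlow ((q + W)/2) ltac:(lra)). simpl in Hlow.
    assert (hm * q < hm * ((q+W)/2)) by (apply Rmult_lt_compat_l; lra). lra.
Qed.

Lemma OPT_lower n h t T : valid_instance n h t -> is_MST n t T ->
  Rbar_le (Finite (h (n-1)%nat * tree_weight t T)) (OPT n h t).
Proof.
  intros Hi HT. unfold OPT, Rbar_glb. destruct (Rbar_ex_glb _) as [l Hl]. simpl. destruct Hl as [_ Hl]. change (Rbar_le (Finite (h (n-1)%nat * tree_weight t T)) l).
  apply Hl. intros M [w [a [d [Hv ->]]]]. eapply MH_lower; eauto.
Qed.

Fixpoint sumto (f : nat -> R) (k : nat) : R :=
  match k with O => 0 | S k' => sumto f k' + f k' end.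

Lemma sumto_le f g K : (forall k, (k < K)%nat -> f k <= g k) -> sumto f K <= sumto g K.
Proof. induction K; simpl; intros H. lra. pose proof (H K ltac:(lia)). pose proof (IHK ltac:(intros; apply H; lia)). lra. Qed.

Lemma sumto_mono f j K : (forall k, (k < K)%nat -> 0 <= f k) -> (j <= K)%nat -> sumto f j <= sumto f K.
Proof. intros H Hj. induction Hj. lra. simpl. pose proof (H m ltac:(lia)). pose proof (IHHj ltac:(intros; apply H; lia)). lra. Qed.

Lemma sumto_plus f g K : sumto (fun k => f k + g k) K = sumto f K + sumto g K.
Proof. induction K; simpl. lra. rewrite IHK. lra. Qed.

Lemma sumto_zero K : sumto (fun _ => 0) K = 0.
Proof. induction K; simpl. lra. rewrite IHK. lra. Qed.

Lemma sumto_ind (b : nat -> bool) c K :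
  sumto (fun k => if b k then c else 0) K = c * INR (length (filter b (seq 0 K))).
Proof.
  induction K. simpl. lra. cbn [sumto]. rewrite IHK, seq_S, filter_app, length_app. simpl.
  destruct (b K); simpl; rewrite ?plus_INR; simpl; lra.
Qed.

Lemma fold_ge (l : list (nat*nat)) (phi : nat*nat -> R) :
  (forall e, In e l -> 0 <= phi e) -> forall e, In e l -> phi e <= fold_right (fun e acc => phi e + acc) 0 l.
Proof.
  induction l as [|e0 l IH]; intros H e He; simpl in *. contradiction.
  assert (0 <= fold_right (fun e acc => phi e + acc) 0 l).
  { clear IH He. induction l; simpl. lra. assert (0 <= phi a) by (apply H; simpl; tauto).
    assert (0 <= fold_right (fun e acc => phi e + acc) 0 l) by (apply IHl; intros; apply H; simpl in *; tauto). lra. }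
  destruct He as [->|He]. pose proof (H e (or_introl eq_refl)). lra.
  pose proof (IH ltac:(intros; apply H; tauto) e He). pose proof (H e0 (or_introl eq_refl)). lra.
Qed.

Definition phi (t : nat -> nat -> R) (p : nat -> nat) (k : nat) (e : nat*nat) : R :=
  if same_edge e (p k) (p (S k)) then t (fst e) (snd e) else 0.

Lemma sumto_G t p K (l : list (nat*nat)) :
  sumto (fun k => fold_right (fun e acc => phi t p k e + acc) 0 l) K =
  fold_right (fun e acc => sumto (fun k => phi t p k e) K + acc) 0 l.
Proof.
  induction l as [|e l IH]; simpl. apply sumto_zero.
  rewrite sumto_plus, IH. reflexivity.
Qed.

Lemma euler_sum t p m (l : list (nat*nat)) :
  (forall e, In e l -> length (filter (fun k => same_edge e (p k) (p (S k))) (seq 0 m)) = 2%nat) ->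
  fold_right (fun e acc => sumto (fun k => phi t p k e) m + acc) 0 l = 2 * tree_weight t l.
Proof.
  induction l as [|e l IH]; intros H; simpl. lra.
  unfold phi at 1. rewrite sumto_ind, H by (simpl; tauto). rewrite IH by (intros; apply H; simpl; tauto).
  simpl. lra.
Qed.

Lemma tree_facts n h t T : valid_instance n h t -> is_MST n t T ->
  forall u v, edge_in T u v -> (u < n)%nat /\ (v < n)%nat /\ u <> v /\ 0 < t u v.
Proof.
  intros Hi [[_ [HT _]] _] u v Huv.
  destruct Hi as [_ [_ [_ [_ [Htp _]]]]].
  assert ((u < n)%nat /\ (v < n)%nat /\ u <> v).
  { destruct Huv as [H|H]; apply HT in H; lia. }
  repeat split; try tauto. apply Htp; tauto.
Qed.

Lemma period_bound n h t T p m : valid_instance n h t -> is_MST n t T -> euler_tour T p m ->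
  sumto (fun k => t (p k) (p (S k))) m <= 2 * tree_weight t T.
Proof.
  intros Hi HT He. pose proof He as [Hm [Hp0 [Hpm [Hed Hcnt]]]].
  pose proof Hi as [_ [_ [_ [_ [_ [Hts _]]]]]].
  rewrite <- (euler_sum t p m T Hcnt), <- sumto_G.
  apply sumto_le. intros k Hk.
  assert (Hnn : forall e, In e T -> 0 <= phi t p k e).
  { intros [u v] Hin. unfold phi. destruct same_edge; [|lra].
    destruct (tree_facts _ _ _ _ Hi HT u v (or_introl Hin)) as [_ [_ [_ H]]]. simpl; lra. }
  destruct (Hed k Hk) as [Hin|Hin].
  - pose proof (fold_ge T (phi t p k) Hnn _ Hin). unfold phi at 1 in H.
    unfold same_edge in H. simpl in H. rewrite !Nat.eqb_refl in H. simpl in H. exact H.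
  - pose proof (fold_ge T (phi t p k) Hnn _ Hin). unfold phi at 1 in H.
    unfold same_edge in H. simpl in H. rewrite !Nat.eqb_refl, Bool.orb_true_r in H. simpl in H.
    destruct (tree_facts _ _ _ _ Hi HT _ _ (or_intror Hin)) as [H1 [H2 [H3 _]]].
    rewrite Hts; auto.
Qed.

Lemma alg_walk_S p m k : (0 < m)%nat -> p m = p 0%nat -> alg_walk p m (S k) = p (S (k mod m)).
Proof.
  intros Hm Hpm. unfold alg_walk.
  pose proof (Nat.div_mod k m ltac:(lia)) as Hk.
  pose proof (Nat.mod_upper_bound k m ltac:(lia)).
  set (r := (k mod m)%nat) in *. set (q := (k / m)%nat) in *.
  destruct (Nat.eq_dec (S r) m) as [E|E].
  - assert (S k = (S q) * m)%nat by nia. rewrite H0, Nat.Div0.mod_mul, E. auto.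
  - assert (S k = S r + q * m)%nat by nia. rewrite H0, Nat.Div0.mod_add, Nat.mod_small by lia. auto.
Qed.

Lemma alg_time_S t p m k : alg_time t p m (S k) = alg_time t p m k + t (alg_walk p m k) (alg_walk p m (S k)).
Proof. reflexivity. Qed.

Lemma alg_walk_add p m k : alg_walk p m (k + m) = alg_walk p m k.
Proof. unfold alg_walk. replace (k + m)%nat with (k + 1 * m)%nat by lia. rewrite Nat.Div0.mod_add. auto. Qed.

Lemma alg_walk_addq p m j q : alg_walk p m (j + q * m) = alg_walk p m j.
Proof. unfold alg_walk. rewrite Nat.Div0.mod_add. auto. Qed.

Lemma alg_time_sumto t p m k : (0 < m)%nat -> p m = p 0%nat -> (k <= m)%nat ->
  alg_time t p m k = sumto (fun k => t (p k) (p (S k))) k.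
Proof.
  intros Hm Hpm. induction k; intros Hk. reflexivity.
  rewrite alg_time_S, IHk by lia. cbn [sumto]. rewrite alg_walk_S by auto.
  unfold alg_walk. rewrite Nat.mod_small by lia. reflexivity.
Qed.

Lemma alg_time_period t p m k : (0 < m)%nat -> p m = p 0%nat ->
  alg_time t p m (k + m) = alg_time t p m k + alg_time t p m m.
Proof.
  intros Hm Hpm. induction k. simpl (0 + m)%nat. simpl (alg_time t p m 0). lra.
  replace (S k + m)%nat with (S (k + m)) by lia. rewrite !alg_time_S, IHk.
  rewrite alg_walk_add. replace (S (k + m)) with (S k + m)%nat by lia. rewrite alg_walk_add. lra.
Qed.

Lemma alg_time_mult t p m j q : (0 < m)%nat -> p m = p 0%nat ->
  alg_time t p m (j + q * m) = alg_time t p m j + INR q * alg_time t p m m.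
Proof.
  intros Hm Hpm. induction q. simpl. rewrite Nat.add_0_r. lra.
  replace (j + S q * m)%nat with ((j + q * m) + m)%nat by lia.
  rewrite alg_time_period, IHq, S_INR by auto. lra.
Qed.

Lemma visited n h t T p m : valid_instance n h t -> is_MST n t T -> euler_tour T p m ->
  forall i, (i < n)%nat -> exists j, (j < m)%nat /\ p j = i.
Proof.
  intros Hi [[_ [_ [_ Hr]]] _] [Hm [Hp0 [Hpm [Hed Hcnt]]]] i Hin.
  destruct (Nat.eq_dec i 0) as [->|Hi0]. exists 0%nat; auto.
  specialize (Hr i Hin). inversion Hr; subst. contradiction.
  assert (Hex : exists e, In e T /\ (fst e = i \/ snd e = i)).
  { destruct H0 as [H0|H0]; eexists; split; eauto; simpl; auto. }
  destruct Hex as [e [HeT Hei]].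
  specialize (Hcnt e HeT).
  destruct (filter (fun k => same_edge e (p k) (p (S k))) (seq 0 m)) as [|k l] eqn:Hf; [discriminate|].
  assert (Hk : In k (filter (fun k => same_edge e (p k) (p (S k))) (seq 0 m))) by (rewrite Hf; left; auto).
  apply filter_In in Hk. destruct Hk as [Hk Hs]. apply in_seq in Hk.
  unfold same_edge in Hs. apply Bool.orb_true_iff in Hs.
  destruct Hs as [Hs|Hs]; apply andb_prop in Hs; destruct Hs as [H1 H2]; apply Nat.eqb_eq in H1, H2.
  - destruct Hei as [Hei|Hei].
    + exists k; split; [lia|congruence].
    + destruct (Nat.eq_dec (S k) m). subst m. exists 0%nat. split; [lia|congruence].
      exists (S k). split; [lia|congruence].
  - destruct Hei as [Hei|Hei].
    + destruct (Nat.eq_dec (S k) m). subst m. exists 0%nat. split; [lia|congruence].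
      exists (S k). split; [lia|congruence].
    + exists k; split; [lia|congruence].
Qed.

Lemma alg_MH_upper n h t T p m : valid_instance n h t -> is_MST n t T -> euler_tour T p m ->
  Rbar_le (MH n h (alg_walk p m) (alg_time t p m) (alg_time t p m))
          (Finite (h 0%nat * (2 * alg_time t p m m))).
Proof.
  intros Hi HT He. pose proof He as [Hm [Hp0 [Hpm [Hed Hcnt]]]].
  assert (Hpm' : p m = p 0%nat) by congruence.
  set (P := alg_time t p m m).
  set (f := fun k => t (p k) (p (S k))).
  assert (Hf : forall k, (k < m)%nat -> 0 < f k).
  { intros k Hk. destruct (tree_facts _ _ _ _ Hi HT _ _ (Hed k Hk)) as [_ [_ [_ H]]]. exact H. }
  assert (HfP : forall j, (j <= m)%nat -> 0 <= alg_time t p m j <= P).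
  { intros j Hj. unfold P. rewrite !alg_time_sumto by auto. split.
    - change 0 with (sumto f 0). apply sumto_mono; [intros k Hk; apply Rlt_le; apply Hf; lia|lia].
    - apply sumto_mono; [intros k Hk; apply Rlt_le; apply Hf; lia|lia]. }
  assert (HP : 0 < P).
  { pose proof (HfP 1%nat ltac:(lia)). unfold P. rewrite alg_time_sumto by auto.
    apply Rlt_le_trans with (sumto f 1). simpl. pose proof (Hf 0%nat Hm). unfold f in *. lra.
    apply sumto_mono; [intros k Hk; apply Rlt_le; apply Hf; lia|lia]. }
  pose proof Hi as [Hn2 [Hhm [Hhp _]]].
  assert (Hrec : forall i, (i < n)%nat -> forall N tau, 0 <= tau < INR N * P -> exists s,
    (s = 0 \/ (0 <= s <= tau /\ Defs.at_point (alg_walk p m) (alg_time t p m) (alg_time t p m) i s)) /\ tau - s <= 2 * P).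
  { intros i Hin. destruct (visited _ _ _ _ _ _ Hi HT He i Hin) as [j [Hj Hpj]].
    induction N; intros tau Htau.
    - simpl in Htau. lra.
    - destruct (Rlt_le_dec tau (INR N * P)) as [Hlt|Hge].
      + apply IHN; lra.
      + rewrite S_INR in Htau. destruct N as [|N'].
        * exists 0. split; [left; auto|]. simpl in Htau. lra.
        * exists (alg_time t p m (j + N' * m)). rewrite alg_time_mult by auto.
          pose proof (HfP j ltac:(lia)). fold P. rewrite S_INR in Htau, Hge.
          assert (0 <= INR N') by apply pos_INR.
          assert (0 <= INR N' * P) by (apply Rmult_le_pos; lra).
          split; [right; split; [split|]|].
          -- lra.
          -- nra.
          -- exists (j + N' * m)%nat. rewrite alg_walk_addq. unfold alg_walk.
             rewrite Nat.mod_small by auto. split; auto. rewrite alg_time_mult by auto. fold P. lra.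
          -- nra. }
  unfold MH. destruct (Lub_Rbar_correct (fun x => exists i tau, (i < n)%nat /\ 0 <= tau /\
     x = height h (alg_walk p m) (alg_time t p m) (alg_time t p m) i tau)) as [_ Hl].
  apply Hl. intros x [i [tau [Hin [Htau ->]]]]. simpl.
  destruct (nfloor_ex (tau / P)) as [N HN]. apply Rdiv_le_0_compat; lra.
  destruct (Hrec i Hin (S N) tau) as [s [Hs Hts]].
  { split; auto. rewrite S_INR. destruct HN as [_ HN].
    apply Rmult_lt_reg_r with (/ P). apply Rinv_0_lt_compat; lra.
    rewrite Rmult_assoc, Rinv_r by lra. rewrite Rmult_1_r. exact HN. }
  unfold height.
  assert (Hlc : s <= last_cut (alg_walk p m) (alg_time t p m) (alg_time t p m) i tau).
  { unfold last_cut. apply lub_ge with tau. exact Hs. intros y [->|[Hy _]]; lra. }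
  assert (Hhi : 0 < h i) by (apply Rlt_le_trans with (h (n-1)%nat); auto; apply Hhm; lia).
  assert (Hh0 : h i <= h 0%nat) by (apply Hhm; lia).
  apply Rle_trans with (h i * (2 * P)).
  - apply Rmult_le_compat_l; lra.
  - apply Rmult_le_compat_r; lra.
Qed.

Theorem theorem4 :
  exists c : R, 0 < c /\
  forall (n : nat) (h : nat -> R) (t : nat -> nat -> R)
         (T : list (nat * nat)) (p : nat -> nat) (m : nat),
    valid_instance n h t ->
    is_MST n t T ->
    euler_tour T p m ->
    Rbar_le (MH n h (alg_walk p m) (alg_time t p m) (alg_time t p m))
            (Rbar_mult (Finite (c * (h 0%nat / h (n - 1)%nat))) (OPT n h t)).
Proof.
  exists 4. split; [lra|]. intros n h t T p m Hi HT He.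
  pose proof (alg_MH_upper _ _ _ _ _ _ Hi HT He) as Hup.
  pose proof (OPT_lower _ _ _ _ Hi HT) as Hlo.
  pose proof He as [Hm [Hp0 [Hpm _]]].
  assert (HP : alg_time t p m m <= 2 * tree_weight t T).
  { rewrite alg_time_sumto by (auto || congruence). eapply period_bound; eauto. }
  pose proof Hi as [Hn2 [Hhm [Hhp [Hh0 _]]]].
  set (hm := h (n-1)%nat) in *. set (h0 := h 0%nat) in *. set (W := tree_weight t T) in *.
  assert (Hc : 0 < 4 * (h0 / hm)) by (apply Rmult_lt_0_compat; [lra|apply Rdiv_lt_0_compat; lra]).
  destruct (OPT n h t) as [o| |] eqn:HO; simpl in Hlo.
  - simpl. apply Rbar_le_trans with (1 := Hup). simpl.
    assert (4 * (h0 / hm) * (hm * W) <= 4 * (h0 / hm) * o) by (apply Rmult_le_compat_l; lra).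
    replace (4 * (h0 / hm) * (hm * W)) with (4 * h0 * W) in H by (field; lra).
    nra.
  - unfold Rbar_mult, Rbar_mult'. destruct (Rle_dec 0 (4 * (h0 / hm))) as [H|H]; [|lra].
    destruct (Rle_lt_or_eq_dec 0 _ H) as [_|H']; [|lra].
    destruct (MH _ _ _ _ _); simpl; auto.
  - contradiction.
Qed.
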